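(* Let $G=(V,E)$ be a finite graph and $A \subset V$, $A \neq \emptyset$. Then: (i) $\mathbb P_V(A \in \mathrm{Inv}) = Z(A) Z(A^c) / Z(V)$. (ii) For $\mathcal F_A$-measurable $f$, $\mathbb E_V(f \mid A \in \mathrm{Inv}) = \mathbb E_A(f(\cdot \oplus \mathrm{id}))$. (iii) For $\mathcal F_A$-measurable $f$ and $\mathcal F_{A^c}$-measurable $g$, $$\mathbb E_V(f g \mid A \in \mathrm{Inv}) = \mathbb E_V(f \mid A \in \mathrm{Inv})\, \mathbb E_V(g \mid A \in \mathrm{Inv}) = \mathbb E_A(f(\cdot \oplus \mathrm{id}))\, \mathbb E_{A^c}(g(\cdot \oplus \mathrm{id})).$$ (iv) For $\mathcal F_A$-measurable $f$ and $\mathcal B \in \mathcal F_{A^c}$, $\mathbb E_V(f \mid A \in \mathrm{Inv}, \mathcal B) = \mathbb E_A(f)$.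
   Context: For $U\subset V$, $\mathcal S_U$ is the set of bijections $\pi:U\to U$ with $\pi(x)=x$ or $\{x,\pi(x)\}\in E$ for all $x\in U$ (edges within $U$). $\mathcal H_U(\pi)=\sum_{x\in U}\mathbb 1\{\pi(x)\ne x\}$, $Z(U)=\sum_{\pi\in\mathcal S_U}e^{-\alpha\mathcal H_U(\pi)}$ ($Z(\emptyset)=1$), $\mathbb P_U(\pi)=e^{-\alpha\mathcal H_U(\pi)}/Z(U)$, and $\mathbb E_U$ the corresponding expectation. For $B\subset V$, $\mathcal F_B$ is the $\sigma$-algebra on $\mathcal S_V$ generated by the events $\{\pi:\pi(x)=y,\ \pi^{-1}(x)=z\}$, $x\in B$, $y,z\in V$. $\mathrm{Inv}(\pi)=\{A\subset V:\pi(A)=A\}$ and $\{A\in\mathrm{Inv}\}$ is the event $\{\pi:\pi(A)=A\}$. For $\pi\in\mathcal S_A$, $\pi\oplus\mathrm{id}\in\mathcal S_V$ is the extension of $\pi$ by the identity outside $A$; for $f$ on $\mathcal S_V$, $\mathbb E_A(f)$ means $\mathbb E_A(f(\cdot\oplus\mathrm{id}))$. *)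

(* Defs.v *)
From HB Require Import structures.
From mathcomp Require Import all_boot all_order all_algebra all_fingroup.
From mathcomp Require Import all_classical all_reals all_analysis.
Set Implicit Arguments. Unset Strict Implicit. Unset Printing Implicit Defensive.
Import Order.TTheory GRing.Theory Num.Theory.
Local Open Scope ring_scope.
Local Open Scope classical_set_scope.

(* Finite graph G = (V,E): V = T (a finType), E given by a symmetric relation e
   (x ~ y iff {x,y} \in E).  Elements of S_U are represented as permutations of
   the whole vertex set T that fix every point outside U, i.e. pi (+) id.     *)
Section RandomPermutations.
Variables (T : finType) (e : rel T) (R : realType) (alpha : R).

Definition in_S (U : {set T}) (p : {perm T}) : bool :=
  perm_on U p && [forall x in U, (p x == x) || e x (p x)].

Definition Ham (U : {set T}) (p : {perm T}) : R :=
  (#|[set x in U | p x != x]|)%:R.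

Definition weight (U : {set T}) (p : {perm T}) : R := expR (- alpha * Ham U p).

Definition Z (U : {set T}) : R := \sum_(p | in_S U p) weight U p.

Definition PrU (U : {set T}) (p : {perm T}) : R := weight U p / Z U.

(* E_U(f) := E_U(f(. (+) id)) *)
Definition EU (U : {set T}) (f : {perm T} -> R) : R :=
  \sum_(p | in_S U p) f p * PrU U p.

Definition SV : set {perm T} := [set p | in_S [set: T] p].

Definition PrV (C : set {perm T}) : R :=
  \sum_(p | in_S [set: T] p) PrU [set: T] p * \1_C p.

Definition condEV (f : {perm T} -> R) (C : set {perm T}) : R :=
  (\sum_(p | in_S [set: T] p) f p * \1_C p * PrU [set: T] p) / PrV C.

Definition InvEv (A : {set T}) : set {perm T} := [set p | p @: A = A].

Definition gensF (B : {set T}) : set (set {perm T}) :=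
  [set C | exists x y z, x \in B /\
     C = SV `&` [set p : {perm T} | p x = y /\ (p^-1)%g x = z]].

Definition sigF (B : {set T}) : set (set {perm T}) := <<s SV, gensF B>>.

Definition Fmeasurable (B : {set T}) (f : {perm T} -> R) : Prop :=
  forall Y : set R, measurable Y -> sigF B (SV `&` f @^-1` Y).

End RandomPermutations.

(* Main.v *)
Require Import Defs.
From HB Require Import structures.
From mathcomp Require Import all_boot all_order all_algebra all_fingroup.
From mathcomp Require Import all_classical all_reals all_analysis.
From mathcomp Require Import ring lra.
Import Order.TTheory GRing.Theory Num.Theory.
Local Open Scope ring_scope.
Local Open Scope classical_set_scope.
Set Implicit Arguments. Unset Strict Implicit. Unset Printing Implicit Defensive.

Section Aux.
Variables (T : finType) (e : rel T) (R : realType) (alpha : R).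

Definition agree (B : {set T}) (p q : {perm T}) :=
  forall x, x \in B -> p x = q x /\ (p^-1)%g x = (q^-1)%g x.

Lemma agree_sym B p q : agree B p q -> agree B q p.
Proof. by move=> H x /H [-> ->]. Qed.

Lemma sigF_agree B X p q : sigF e B X -> SV e p -> SV e q -> agree B p q ->
  X p -> X q.
Proof.
move=> HX; move: p q.
pose H := fun X : set {perm T} => forall p q, SV e p -> SV e q -> agree B p q -> X p -> X q.
suff : sigF e B `<=` H by move/(_ X HX).
apply: smallest_sub.
  split.
  - by move=> p q _ _ _.
  - move=> Y HY p q Sp Sq Hpq [_ nYp]; split => // Yq; apply: nYp.
    exact: (HY q p Sq Sp (agree_sym Hpq) Yq).
  - move=> F HF p q Sp Sq Hpq [n _ Fp]; exists n => //.
    exact: (HF n p q).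
move=> Y [x [y [z [xB ->]]]] p q Sp Sq Hpq [_ [<- <-]]; split => //.
by have [-> ->] := Hpq x xB.
Qed.

Lemma Fmeas_agree B (f : {perm T} -> R) p q : Fmeasurable e B f -> SV e p -> SV e q -> agree B p q ->
  f q = f p.
Proof.
move=> Hf Sp Sq Hpq.
have := sigF_agree (Hf [set f p] (measurable_set1 _)) Sp Sq Hpq.
by case=> //.
Qed.
End Aux.
Section Perm.
Variables (T : finType) (e : rel T) (A : {set T}).
Local Open Scope group_scope.

Lemma invN (p : {perm T}) : (p \in 'N(A | 'P)) = (p @: A == A).
Proof.
apply/idP/idP.
  move/astabsP => H; rewrite eqEcard card_imset ?leqnn ?andbT; last exact: perm_inj.
  apply/fintype.subsetP => y /imsetP [x xA ->]; by have := H x; rewrite /= xA.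
move/eqP => H; apply/astabsP => x /=; apply/idP/idP => [pxA|xA].
  by move: pxA; rewrite -{1}H (mem_imset _ _ perm_inj).
by rewrite -H; apply: imset_f.
Qed.

Lemma invNC (p : {perm T}) : p \in 'N(A | 'P) -> p \in 'N(~: A | 'P).
Proof. by move/astabsP => H; apply/astabsP => x; rewrite !inE H. Qed.

Lemma decomp (p : {perm T}) : p \in 'N(A | 'P) ->
  (restr_perm A p * restr_perm (~: A) p)%g = p.
Proof.
move=> pN; have pNC := invNC pN.
apply/permP => x; rewrite permM.
case xA: (x \in A).
  rewrite (restr_permE pN xA); apply: (out_perm (restr_perm_on _ _)).
  by rewrite inE negbK (astabs_act _ pN).
have xAc : x \in ~: A by rewrite inE xA.
by rewrite (out_perm (restr_perm_on A p) (negbT xA)) (restr_permE pNC xAc).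
Qed.

Lemma compN (q1 q2 : {perm T}) : perm_on A q1 -> perm_on (~: A) q2 ->
  forall x, ((q1 * q2)%g x \in A) = (x \in A) /\
            (q1 * q2)%g x = if x \in A then q1 x else q2 x.
Proof.
move=> h1 h2 x; rewrite permM.
case xA: (x \in A).
  have q1A : q1 x \in A by rewrite perm_closed.
  by rewrite (out_perm h2) ?inE ?negbK.
rewrite (out_perm h1) ?xA //; split => //.
have : q2 x \in ~: A by rewrite perm_closed // inE xA.
by rewrite inE => /negbTE.
Qed.

Lemma compN' (q1 q2 : {perm T}) : perm_on A q1 -> perm_on (~: A) q2 ->
  (q1 * q2)%g \in 'N(A | 'P).
Proof. by move=> h1 h2; apply/astabsP => x /=; case: (compN h1 h2 x). Qed.

Lemma restr_comp1 (q1 q2 : {perm T}) : perm_on A q1 -> perm_on (~: A) q2 ->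
  restr_perm A (q1 * q2)%g = q1.
Proof.
move=> h1 h2; apply/permP => x.
case xA: (x \in A).
  by rewrite restr_permE ?compN' //; case: (compN h1 h2 x) => _ ->; rewrite xA.
by rewrite !(out_perm _ (negbT xA)) // restr_perm_on.
Qed.

Lemma restr_comp2 (q1 q2 : {perm T}) : perm_on A q1 -> perm_on (~: A) q2 ->
  restr_perm (~: A) (q1 * q2)%g = q2.
Proof.
move=> h1 h2; apply/permP => x.
case xA: (x \in A).
  have xAc : x \notin ~: A by rewrite inE xA.
  by rewrite !(out_perm _ xAc) // restr_perm_on.
rewrite restr_permE ?invNC ?compN' ?inE ?xA //.
by case: (compN h1 h2 x) => _ ->; rewrite xA.
Qed.

End Perm.

Section Main.
Variables (T : finType) (e : rel T) (R : realType) (alpha : R) (A : {set T}).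

Lemma in_S_perm (U : {set T}) (p : {perm T}) : in_S e U p -> perm_on U p.
Proof. by case/andP. Qed.

Lemma in_S_edge (U : {set T}) (p : {perm T}) x : in_S e U p -> x \in U -> (p x == x) || e x (p x).
Proof. by case/andP => _ /forallP /(_ x) /implyP; apply. Qed.

Lemma in_S_widen (U W : {set T}) (p : {perm T}) : U \subset W -> in_S e U p -> in_S e W p.
Proof.
move=> sUW hS; apply/andP; split.
  exact: fintype.subset_trans (in_S_perm hS) sUW.
apply/forallP => x; apply/implyP => xW.
case xU: (x \in U); first exact: in_S_edge hS xU.
by rewrite (out_perm (in_S_perm hS)) ?xU ?eqxx.
Qed.

Lemma in_S_comp (q1 q2 : {perm T}) : in_S e A q1 -> in_S e (~: A) q2 ->
  in_S e [set: T] (q1 * q2)%g.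
Proof.
move=> h1 h2; apply/andP; split; first by apply/fintype.subsetP => x _; rewrite finset.in_setT.
apply/forallP => x; apply/implyP => _.
case: (compN (in_S_perm h1) (in_S_perm h2) x) => _ ->.
case xA: (x \in A); first exact: in_S_edge h1 xA.
by apply: in_S_edge h2 _; rewrite inE xA.
Qed.

Lemma in_S_restr1 (p : {perm T}) : in_S e [set: T] p -> p \in 'N(A | 'P)%g ->
  in_S e A (restr_perm A p).
Proof.
move=> hS hN; apply/andP; split; first exact: restr_perm_on.
apply/forallP => x; apply/implyP => xA.
rewrite (restr_permE hN xA); exact: in_S_edge hS (finset.in_setT x).
Qed.

Lemma in_S_restr2 (p : {perm T}) : in_S e [set: T] p -> p \in 'N(A | 'P)%g ->
  in_S e (~: A) (restr_perm (~: A) p).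
Proof.
move=> hS hN; have hNC := invNC hN.
apply/andP; split; first exact: restr_perm_on.
apply/forallP => x; apply/implyP => xA.
rewrite (restr_permE hNC xA); exact: in_S_edge hS (finset.in_setT x).
Qed.

Lemma Ham_comp (q1 q2 : {perm T}) : perm_on A q1 -> perm_on (~: A) q2 ->
  Ham R [set: T] (q1 * q2)%g = Ham R A q1 + Ham R (~: A) q2.
Proof.
move=> h1 h2; rewrite /Ham -natrD -(cardsID A).
congr (_ %:R); congr (_ + _)%N; apply: eq_card => x; rewrite !inE;
  case: (compN h1 h2 x) => _ ->; case: (x \in A) => //=; rewrite ?andbF ?andbT //.
Qed.

Lemma weight_comp (q1 q2 : {perm T}) : perm_on A q1 -> perm_on (~: A) q2 ->
  weight alpha [set: T] (q1 * q2)%g = weight alpha A q1 * weight alpha (~: A) q2.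
Proof. by move=> h1 h2; rewrite /weight Ham_comp // mulrDr expRD. Qed.

Lemma Z_gt0 (U : {set T}) : 0 < Z e alpha U.
Proof.
have h1 : in_S e U 1%g.
  apply/andP; split; first exact: perm_on1.
  by apply/forallP => x; rewrite perm1 eqxx implybT.
rewrite /Z (bigD1 1%g) //=.
have a := expR_gt0 (- alpha * Ham R U 1%g).
have b : 0 <= \sum_(i | in_S e U i && (i != 1%g)) weight alpha U i.
  by apply: sumr_ge0 => i _; apply/ltW/expR_gt0.
rewrite /weight; lra.
Qed.

Lemma sum_inv (K : {perm T} -> R) :
  \sum_(p | in_S e [set: T] p) K p * \1_(InvEv A) p =
  \sum_(q1 | in_S e A q1) \sum_(q2 | in_S e (~: A) q2) K (q1 * q2)%g.
Proof.
rewrite pair_big /=.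
transitivity (\sum_(p | in_S e [set: T] p && (p \in 'N(A | 'P)%g)) K p).
  rewrite [RHS]big_mkcondr /=; apply: eq_bigr => p _; rewrite indicE.
  have [pN|pN] := boolP (p \in 'N(A | 'P)%g).
    by rewrite mem_set ?mulr1 //; apply/eqP; rewrite -invN.
  rewrite memNset ?mulr0 //; move=> /eqP; by rewrite -invN (negbTE pN).
rewrite (reindex_onto (fun j : {perm T} * {perm T} => (j.1 * j.2)%g)
   (fun p => (restr_perm A p, restr_perm (~: A) p))) /=; last first.
  by move=> p /andP [_ pN]; exact: decomp.
apply: eq_bigl => [[q1 q2]] /=.
apply/idP/idP.
  case/andP => /andP [hS hN] /eqP [E1 E2].
  have := in_S_restr1 hS hN; rewrite E1 => ->.
  by have := in_S_restr2 hS hN; rewrite E2 => ->.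
case/andP => h1 h2.
rewrite in_S_comp // compN' ?in_S_perm //.
by rewrite restr_comp1 ?in_S_perm // restr_comp2 ?in_S_perm // eqxx.
Qed.

Lemma sum_fact (K F1 F2 : {perm T} -> R) :
  (forall q1 q2, in_S e A q1 -> in_S e (~: A) q2 ->
     K (q1 * q2)%g = F1 q1 * F2 q2 * PrU e alpha [set: T] (q1 * q2)%g) ->
  \sum_(p | in_S e [set: T] p) K p * \1_(InvEv A) p =
  (\sum_(q1 | in_S e A q1) F1 q1 * weight alpha A q1) *
  (\sum_(q2 | in_S e (~: A) q2) F2 q2 * weight alpha (~: A) q2) / Z e alpha [set: T].
Proof.
move=> HK; rewrite sum_inv mulrAC big_distrl big_distrl /=; apply: eq_bigr => q1 h1.
rewrite big_distrr /=; apply: eq_bigr => q2 h2.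
rewrite HK // /PrU weight_comp ?in_S_perm //.
ring.
Qed.

End Main.

Section Final.
Variables (T : finType) (e : rel T) (R : realType) (alpha : R) (A : {set T}).

Lemma agree_comp1 (q1 q2 : {perm T}) : in_S e A q1 -> in_S e (~: A) q2 ->
  agree A q1 (q1 * q2)%g.
Proof.
move=> h1 h2 x xA; have p1 := in_S_perm h1; have p2 := in_S_perm h2.
split; first by case: (compN p1 p2 x) => _ ->; rewrite xA.
have xnA : x \notin ~: A by rewrite inE xA.
by rewrite invMg permM (out_perm (perm_onV p2) xnA).
Qed.

Lemma agree_comp2 (q1 q2 : {perm T}) : in_S e A q1 -> in_S e (~: A) q2 ->
  agree (~: A) q2 (q1 * q2)%g.
Proof.
move=> h1 h2 x xA; have p1 := in_S_perm h1; have p2 := in_S_perm h2.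
have xA' : (x \in A) = false by move: xA; rewrite inE => /negbTE.
split; first by case: (compN p1 p2 x) => _ ->; rewrite xA'.
have : (q2^-1)%g x \in ~: A by rewrite perm_closed // perm_onV.
rewrite inE => hx.
by rewrite invMg permM (out_perm (perm_onV p1) hx).
Qed.

Lemma sum1w (U : {set T}) :
  \sum_(q | in_S e U q) 1 * weight alpha U q = Z e alpha U.
Proof. by apply: eq_bigr => q _; rewrite mul1r. Qed.

Lemma EU_eq (U : {set T}) (f : {perm T} -> R) :
  EU e alpha U f = (\sum_(q | in_S e U q) f q * weight alpha U q) / Z e alpha U.
Proof. by rewrite /EU big_distrl; apply: eq_bigr => q _; rewrite /PrU mulrA. Qed.

Lemma num_fact (f g : {perm T} -> R) :
  (forall q1 q2, in_S e A q1 -> in_S e (~: A) q2 -> f (q1 * q2)%g = f q1) ->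
  (forall q1 q2, in_S e A q1 -> in_S e (~: A) q2 -> g (q1 * q2)%g = g q2) ->
  \sum_(p | in_S e [set: T] p) f p * g p * \1_(InvEv A) p * PrU e alpha [set: T] p =
  (\sum_(q1 | in_S e A q1) f q1 * weight alpha A q1) *
  (\sum_(q2 | in_S e (~: A) q2) g q2 * weight alpha (~: A) q2) / Z e alpha [set: T].
Proof.
move=> hf hg.
rewrite (eq_bigr (fun p => (f p * g p * PrU e alpha [set: T] p) * \1_(InvEv A) p));
  last by move=> p _; rewrite mulrAC.
apply: sum_fact => q1 q2 h1 h2; by rewrite hf // hg.
Qed.

End Final.

Unset Implicit Arguments.

Theorem proposition4p1 (T : finType) (e : rel T) (R : realType) (alpha : R)
  (He : symmetric e) (A : {set T}) (HA : A != finset.set0) :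
  [/\ PrV e alpha (InvEv A) = Z e alpha A * Z e alpha (~: A) / Z e alpha [set: T],
      (forall f : {perm T} -> R, Fmeasurable e A f ->
         condEV e alpha f (InvEv A) = EU e alpha A f),
      (forall f g : {perm T} -> R, Fmeasurable e A f -> Fmeasurable e (~: A) g ->
         condEV e alpha (fun p => f p * g p) (InvEv A)
           = condEV e alpha f (InvEv A) * condEV e alpha g (InvEv A)
         /\ condEV e alpha f (InvEv A) * condEV e alpha g (InvEv A)
           = EU e alpha A f * EU e alpha (~: A) g) &
      (forall (f : {perm T} -> R) (B : set {perm T}),
         Fmeasurable e A f -> sigF e (~: A) B ->
         PrV e alpha (InvEv A `&` B) != 0 ->
         condEV e alpha f (InvEv A `&` B) = EU e alpha A f)].
Proof.
have ZA := Z_gt0 e alpha A; have ZAc := Z_gt0 e alpha (~: A).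
have ZV := Z_gt0 e alpha [set: T].
have SV1 : forall q, in_S e A q -> SV e q := fun q => in_S_widen (finset.subsetT A).
have SV2 : forall q, in_S e (~: A) q -> SV e q :=
  fun q => in_S_widen (finset.subsetT (~: A)).
have SVc : forall q1 q2, in_S e A q1 -> in_S e (~: A) q2 -> SV e (q1 * q2)%g :=
  fun q1 q2 => @in_S_comp T e A q1 q2.
have fA : forall f : {perm T} -> R, Fmeasurable e A f ->
    forall q1 q2, in_S e A q1 -> in_S e (~: A) q2 -> f (q1 * q2)%g = f q1.
  move=> f Hf q1 q2 h1 h2.
  exact: (Fmeas_agree Hf (SV1 _ h1) (SVc _ _ h1 h2) (agree_comp1 h1 h2)).
have gA : forall g : {perm T} -> R, Fmeasurable e (~: A) g ->
    forall q1 q2, in_S e A q1 -> in_S e (~: A) q2 -> g (q1 * q2)%g = g q2.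
  move=> g Hg q1 q2 h1 h2.
  exact: (Fmeas_agree Hg (SV2 _ h2) (SVc _ _ h1 h2) (agree_comp2 h1 h2)).
have c1 : forall q1 q2 : {perm T}, in_S e A q1 -> in_S e (~: A) q2 ->
    (fun _ => 1 : R) (q1 * q2)%g = 1 by [].
have PrInv : PrV e alpha (InvEv A) = Z e alpha A * Z e alpha (~: A) / Z e alpha [set: T].
  have := @num_fact T e R alpha A (fun _ => 1) (fun _ => 1) c1 c1.
  rewrite /= !sum1w => <-; rewrite /PrV.
  by apply: eq_bigr => p _; rewrite !mul1r mulrC.
have numf : forall f : {perm T} -> R, Fmeasurable e A f ->
    \sum_(p | in_S e [set: T] p) f p * \1_(InvEv A) p * PrU e alpha [set: T] p =
    (\sum_(q1 | in_S e A q1) f q1 * weight alpha A q1) * Z e alpha (~: A)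
      / Z e alpha [set: T].
  move=> f Hf; have := @num_fact T e R alpha A f (fun _ => 1) (fA f Hf) c1.
  rewrite /= !sum1w => <-.
  by apply: eq_bigr => p _; rewrite mulr1.
have numg : forall g : {perm T} -> R, Fmeasurable e (~: A) g ->
    \sum_(p | in_S e [set: T] p) g p * \1_(InvEv A) p * PrU e alpha [set: T] p =
    Z e alpha A * (\sum_(q2 | in_S e (~: A) q2) g q2 * weight alpha (~: A) q2)
      / Z e alpha [set: T].
  move=> g Hg; have := @num_fact T e R alpha A (fun _ => 1) g c1 (gA g Hg).
  rewrite /= !sum1w => <-.
  by apply: eq_bigr => p _; rewrite mul1r.
have condf : forall f, Fmeasurable e A f -> condEV e alpha f (InvEv A) = EU e alpha A f.
  move=> f Hf; rewrite /condEV numf // PrInv EU_eq.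
  field; rewrite ?gt_eqF //.
have condg : forall g, Fmeasurable e (~: A) g ->
    condEV e alpha g (InvEv A) = EU e alpha (~: A) g.
  move=> g Hg; rewrite /condEV numg // PrInv EU_eq.
  field; rewrite ?gt_eqF //.
split => //.
- move=> f g Hf Hg; rewrite (condf f Hf) (condg g Hg); split => //.
  rewrite /condEV (@num_fact T e R alpha A f g (fA f Hf) (gA g Hg)) PrInv !EU_eq.
  field; rewrite ?gt_eqF //.
move=> f B Hf HB HPr.
have hB : forall q1 q2, in_S e A q1 -> in_S e (~: A) q2 ->
    \1_B (q1 * q2)%g = \1_B q2 :> R.
  move=> q1 q2 h1 h2; rewrite !indicE.
  have [h|h] := pselect (B q2).
    rewrite (mem_set h) mem_set //.
    exact: (sigF_agree HB (SV2 _ h2) (SVc _ _ h1 h2) (agree_comp2 h1 h2) h).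
  rewrite (memNset h) memNset // => h'; apply: h.
  exact: (sigF_agree HB (SVc _ _ h1 h2) (SV2 _ h2) (agree_sym (agree_comp2 h1 h2)) h').
have PrB : PrV e alpha (InvEv A `&` B) =
    Z e alpha A * (\sum_(q2 | in_S e (~: A) q2) \1_B q2 * weight alpha (~: A) q2)
      / Z e alpha [set: T].
  have := @num_fact T e R alpha A (fun _ => 1) (\1_B) c1 hB.
  rewrite /= !sum1w => <-; rewrite /PrV.
  by apply: eq_bigr => p _; rewrite indicI /= mul1r; ring.
have numB : \sum_(p | in_S e [set: T] p) f p * \1_(InvEv A `&` B) p * PrU e alpha [set: T] p =
    (\sum_(q1 | in_S e A q1) f q1 * weight alpha A q1) *
    (\sum_(q2 | in_S e (~: A) q2) \1_B q2 * weight alpha (~: A) q2)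
      / Z e alpha [set: T].
  rewrite -(@num_fact T e R alpha A f (\1_B) (fA f Hf) hB).
  by apply: eq_bigr => p _; rewrite indicI /=; ring.
have SB : (\sum_(q2 | in_S e (~: A) q2) \1_B q2 * weight alpha (~: A) q2) != 0.
  by apply: contraNneq HPr => h; rewrite PrB h mulr0 mul0r.
rewrite /condEV numB PrB EU_eq.
by field; rewrite SB !gt_eqF.
Qed.
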